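(* Let $\mu$ be an $n$-dimensional AD regular measure on $\mathbb R^d$ with $\operatorname{diam}(\operatorname{supp}\mu)=\infty$ and $\mathcal D$ a dyadic lattice of $\mu$-cubes. Let $\epsilon_0>0$ and let $\delta_0>0$, $m_0,k_0\in\mathbb N$ be such that for all $i\in\mathbb Z$ and all $Q\in\mathcal D_i$ with $\beta_{1,\mu}(Q)>\epsilon_0$ there exist $k\in\mathbb Z$ with $|k|\le k_0$ and $P\in\mathcal D_{i+k+m_0}$, $P\subset4Q$, with $|S_{i+k}\mu(x)|\ge\delta_0$ for all $x\in P$. Set $\mathcal B=\{Q\in\mathcal D:\beta_{1,\mu}(Q)>\epsilon_0\}$ and $\widetilde{\mathcal B}=\bigcup_{k\in\mathbb Z}\{Q\in\mathcal D_{k+m_0}:|S_k\mu(x)|\ge\delta_0\ \forall x\in Q\}$. If for some $C_1>0$, $\sum_{Q\in\widetilde{\mathcal B}:Q\subset R}\mu(Q)\le C_1\mu(R)$ for all $R\in\mathcal D$, then there is $C_2>0$ such that $\sum_{Q\in\mathcal B:Q\subset R}\mu(Q)\le C_2\mu(R)$ for all $R\in\mathcal D$.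
   Context: $\mu$ is $n$-dimensional AD regular if $C_\mu^{-1}r^n\le\mu(B(x,r))\le C_\mu r^n$ for $x\in\operatorname{supp}\mu$, $r>0$. A dyadic lattice of $\mu$-cubes is a collection $\mathcal D=\bigcup_{j\in\mathbb Z}\mathcal D_j$ of Borel subsets of $\operatorname{supp}\mu$ such that: each $\mathcal D_j$ partitions $\operatorname{supp}\mu$; if $Q\in\mathcal D_j$, $Q'\in\mathcal D_k$, $k\le j$, then $Q\subset Q'$ or $Q\cap Q'=\emptyset$; for $Q\in\mathcal D_j$, $2^{-j}\lesssim\operatorname{diam}Q\le2^{-j}$ and $\mu(Q)\approx2^{-jn}$; plus the small boundaries condition. For $Q\in\mathcal D_j$, $\ell(Q)=2^{-j}$ and $aQ=\{x\in\operatorname{supp}\mu:\operatorname{dist}(x,Q)\le(a-1)\ell(Q)\}$. $\beta_{1,\mu}(Q)=\inf_L\ell(Q)^{-n}\int_{2Q}\operatorname{dist}(y,L)/\ell(Q)\,d\mu(y)$, infimum over $n$-planes $L$. Let $K(x)=x/|x|^{n+1}$, fix a nondecreasing $C^2$ $\varphi_{\mathbb R}:[0,\infty)\to[0,\infty)$ with $\chi_{[4,\infty)}\le\varphi_{\mathbb R}\le\chi_{[1/4,\infty)}$ and $\chi_{[1/3,3]}\le C|\varphi_{\mathbb R}'|$, $\varphi_\epsilon(x)=\varphi_{\mathbb R}(|x|^2/\epsilon^2)$, and $S_m\mu(x)=\int(\varphi_{2^{-m-1}}(x-y)-\varphi_{2^{-m}}(x-y))K(x-y)\,d\mu(y)$.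 *)

(* Defs.v *)
From HB Require Import structures.
From mathcomp Require Import all_boot all_order all_algebra.
From mathcomp Require Import all_classical all_reals all_analysis.
Set Implicit Arguments. Unset Strict Implicit. Unset Printing Implicit Defensive.
Import Order.TTheory GRing.Theory Num.Theory.
Import numFieldNormedType.Exports.
Local Open Scope classical_set_scope.
Local Open Scope ring_scope.

(* R^d is represented by row vectors
   'rV[R]_d, with the EUCLIDEAN norm defined below (the library norm on
   matrices is the max-norm). *)

Section Defs.
Variables (R : realType) (d : nat).

Definition Rd : Type := g_sigma_algebraType (@open ('rV[R]_d)).

Definition enorm (x : 'rV[R]_d) : R := Num.sqrt (\sum_(i < d) x ord0 i ^+ 2).

Definition eball (x : Rd) (r : R) : set Rd := [set y | enorm (y - x) < r].

Definition edist (x : Rd) (A : set Rd) : R := inf [set enorm (x - y) | y in A].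
Definition ediam (A : set Rd) : R :=
  sup [set enorm (x - y) | x in A & y in A].
Definition ebounded (A : set Rd) : Prop :=
  exists M : R, forall x y, A x -> A y -> enorm (x - y) <= M.

Variable mu : {measure set Rd -> \bar R}.

Definition supp : set Rd := [set x | forall r : R, 0 < r -> (0 < mu (eball x r))%E].

Definition AD_regular (n : nat) : Prop :=
  exists C : R, 0 < C /\ forall x r, supp x -> 0 < r ->
    ((C^-1 * r ^+ n)%:E <= mu (eball x r) /\ mu (eball x r) <= (C * r ^+ n)%:E)%E.

Definition side (j : int) : R := (2%:R : R) ^ (- j).

(* A dyadic lattice of mu-cubes: Dl j is the generation D_j.
   Cubes are understood as pairs (generation, set). *)
Definition dyadic_lattice (n : nat) (Dl : int -> set (set Rd)) : Prop :=
  (forall j Q, Dl j Q -> measurable Q /\ Q `<=` supp /\ Q !=set0) /\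
  (forall j x, supp x -> exists Q, Dl j Q /\ Q x) /\
  (forall j Q Q', Dl j Q -> Dl j Q' -> Q <> Q' -> Q `&` Q' = set0) /\
  (forall j k Q Q', (k <= j)%R -> Dl j Q -> Dl k Q' -> Q `<=` Q' \/ Q `&` Q' = set0) /\
  (exists C : R, 0 < C /\ forall j Q, Dl j Q ->
      C^-1 * side j <= ediam Q /\ ediam Q <= side j /\
      ((C^-1 * side j ^+ n)%:E <= mu Q /\ mu Q <= (C * side j ^+ n)%:E)%E) /\
  (exists C : R, 0 < C /\ forall j Q (lam : R), Dl j Q -> 0 < lam ->
      (mu [set x | Q x /\ (edist x (supp `\` Q) <= lam * side j)%R] +
       mu [set x | supp x /\ ~ Q x /\ (edist x Q <= 3 * side j)%R /\
                   (edist x Q <= lam * side j)%R]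
       <= (C * powR lam C^-1 * side j ^+ n)%:E)%E).

Definition dil (a : R) (j : int) (Q : set Rd) : set Rd :=
  [set x | supp x /\ edist x Q <= (a - 1) * side j].

Definition nplane (n : nat) (L : set Rd) : Prop :=
  exists (a : 'rV[R]_d) (A : 'M[R]_(n, d)),
    \rank A = n /\ L = [set (a + u *m A : Rd) | u in [set: 'rV[R]_n]].

Definition beta1 (n : nat) (j : int) (Q : set Rd) : \bar R :=
  ereal_inf [set (\int[mu]_(y in dil 2 j Q)
                   ((side j ^+ n)^-1 * (edist y L / side j))%:E)%E
            | L in nplane n].

Definition admissible_phi (phi : R -> R) : Prop :=
  (forall x, 0 < x -> derivable phi x 1) /\
  (forall x, 0 < x -> derivable (derive1 phi) x 1) /\
  (forall x, 0 < x -> {for x, continuous (derive1n 2 phi)}) /\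
  (forall x y, 0 <= x -> x <= y -> phi x <= phi y) /\
  (forall x, 0 <= x -> 0 <= phi x) /\
  (forall x, 4 <= x -> 1 <= phi x) /\
  (forall x, 0 <= x -> phi x <= (if 4^-1 <= x then 1 else 0)) /\
  (exists C : R, forall x, 3^-1 <= x <= 3 -> 1 <= C * `|(derive1 phi) x|).

Definition phi_eps (phi : R -> R) (eps : R) (x : 'rV[R]_d) : R :=
  phi (enorm x ^+ 2 / eps ^+ 2).

Definition Sm (n : nat) (phi : R -> R) (m : int) (x : Rd) : 'rV[R]_d :=
  \row_(i < d) Rintegral mu setT (fun y : Rd =>
     (phi_eps phi (side (m + 1)) (x - y) - phi_eps phi (side m) (x - y))
       * ((x - y) ord0 i / enorm (x - y) ^+ n.+1)).

End Defs.

(* Main.v *)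
Require Import Defs.
From HB Require Import structures.
From mathcomp Require Import all_boot all_order all_algebra.
From mathcomp Require Import all_classical all_reals all_analysis.
From mathcomp Require Import ring lra zify.
Import Order.TTheory GRing.Theory Num.Theory.
Import numFieldNormedType.Exports.
Local Open Scope classical_set_scope.
Local Open Scope ring_scope.
Section Geo.
Variables (R : realType) (d : nat).

Lemma cont_sum (T : topologicalType) (I : Type) (s : seq I) (f : I -> T -> R) :
  (forall i, continuous (f i)) -> continuous (fun t => \sum_(i <- s) f i t).
Proof.
move=> fc; elim: s => [|a s IH].
  by under eq_fun do rewrite big_nil; exact: cst_continuous.
under eq_fun do rewrite big_cons.
by move=> t; apply: continuousD; [exact: fc|exact: IH].
Qed.

Lemma enorm_cont (x : 'rV[R]_d) : continuous (fun y : 'rV[R]_d => enorm (y - x)).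
Proof.
move=> y; rewrite /enorm.
apply: (@continuous_comp _ _ _ (fun y : 'rV[R]_d => \sum_(i < d) (y - x) ord0 i ^+ 2) (@Num.sqrt R)); last exact: sqrt_continuous.
apply: cont_sum => i.
have -> : (fun t : 'rV[R]_d => (t - x) ord0 i ^+ 2) = (fun t => (t ord0 i - x ord0 i)^+2).
  by apply/funext=> t; rewrite !mxE.
move=> z.
apply: (@continuous_comp _ _ _ (fun z : 'rV[R]_d => z ord0 i - x ord0 i) (fun t : R => t ^+ 2)); last exact: exprn_continuous.
apply: continuousB; [exact: coord_continuous | exact: cst_continuous].
Qed.

Lemma eball_open (x : Rd R d) r : open (eball x r : set 'rV[R]_d).
Proof.
have -> : (eball x r : set 'rV[R]_d) = (fun y : 'rV[R]_d => enorm (y - x)) @^-1` [set t | t < r] by [].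
apply: open_comp; last exact: open_lt.
by move=> z _; exact: enorm_cont.
Qed.

Lemma eball_meas (x : Rd R d) r : measurable (eball x r).
Proof. exact: sub_sigma_algebra (eball_open x r). Qed.

Local Notation enorm := (@enorm R d).
Lemma enorm_ge0 x : 0 <= enorm x.
Proof. exact: sqrtr_ge0. Qed.

Lemma enormN x : enorm (- x) = enorm x.
Proof. by rewrite /Defs.enorm; congr Num.sqrt; apply: eq_bigr => i _; rewrite mxE sqrrN. Qed.

Lemma enormB x y : enorm (x - y) = enorm (y - x).
Proof. by rewrite -enormN opprB. Qed.

Lemma enorm_quasi x y : enorm (x + y) <= 2 * (enorm x + enorm y).
Proof.
rewrite /Defs.enorm.
set A := \sum_(i < d) x ord0 i ^+ 2; set B := \sum_(i < d) y ord0 i ^+ 2.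
have A0 : 0 <= A by apply: sumr_ge0 => i _; exact: sqr_ge0.
have B0 : 0 <= B by apply: sumr_ge0 => i _; exact: sqr_ge0.
have h1 : \sum_(i < d) (x + y) ord0 i ^+ 2 <= 2 * (A + B).
  rewrite /A /B -big_split /= mulr_sumr; apply: ler_sum => i _.
  have hab : forall a b : R, (a+b)^+2 <= 2*(a^+2+b^+2).
    by move=> a b; rewrite -subr_ge0 (_ : _ - _ = (a - b)^+2); [exact: sqr_ge0|ring].
  by rewrite mxE; apply: hab.
have sA := sqrtr_ge0 A; have sB := sqrtr_ge0 B.
have eA := sqr_sqrtr A0; have eB := sqr_sqrtr B0.
apply: le_trans (ler_wsqrtr h1) _.
rewrite -[X in _ <= X]ger0_norm; last by nra.
rewrite -sqrtr_sqr; apply: ler_wsqrtr; nra.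
Qed.

Lemma enorm_tri x y z : enorm (x - z) <= 2 * (enorm (x - y) + enorm (y - z)).
Proof. by rewrite (_ : x - z = (x - y) + (y - z)); [exact: enorm_quasi|rewrite addrA subrK]. Qed.

End Geo.

Section Side.
Variable (R : realType).

Lemma side_gt0 (j : int) : 0 < side R j.
Proof. by apply: exprz_gt0. Qed.

Lemma sideD (i k : int) : side R (i + k) = side R i * side R k.
Proof. by rewrite /side opprD expfzDr // pnatr_eq0. Qed.

Lemma side_nat (m : nat) : side R m = ((2 : R) ^+ m)^-1.
Proof. by rewrite /side -exprnN. Qed.

Lemma side_Nnat (m : nat) : side R (- (m%:Z)) = (2 : R) ^+ m.
Proof. by rewrite /side opprK. Qed.

Lemma side_le (i i' : int) : i <= i' -> side R i' <= side R i.
Proof.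
move=> lei; have -> : i' = i + (i' - i) by rewrite addrC subrK.
have : 0 <= i' - i by rewrite subr_ge0.
case: (i' - i) => // m _.
rewrite sideD side_nat -[leRHS]mulr1 ler_wpM2l ?(ltW (side_gt0 _)) //.
change (((2:R)^+m)^-1 <= 1); by rewrite invf_le1 ?exprn_ege1 ?exprn_gt0 ?ler1n. 
Qed.

Lemma side_lt (i i' : int) : i < i' -> side R i' < side R i.
Proof.
move=> lei; have -> : i' = i + (i' - i) by rewrite addrC subrK.
have : 0 < i' - i by rewrite subr_gt0.
case: (i' - i) => // -[|m] // _.
rewrite sideD side_nat -[ltRHS]mulr1 ltr_pM2l ?side_gt0 //.
change (((2:R)^+m.+1)^-1 < 1). by rewrite invf_lt1 ?exprn_gt0 // exprn_egt1 // ltr1n.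
Qed.

End Side.

Section Lat.
Variables (R : realType) (d n : nat) (mu : {measure set (Rd R d) -> \bar R})
  (Dl : int -> set (set (Rd R d))).
Local Notation enorm := (@enorm R d).
Local Notation side := (side R).

Lemma lat_diam : dyadic_lattice mu n Dl ->
  forall j Q (x y : Rd R d), Dl j Q -> Q x -> Q y -> enorm (x - y) <= side j.
Proof.
move=> [_ [_ [_ [_ [[C [C0 HC]] _]]]]] j Q x y DQ Qx Qy.
have [h1 [h2 _]] := HC j Q DQ.
set E := [set enorm (x - y) | x in Q & y in Q].
have Exy : E (enorm (x - y)) by exists x => //; exists y.
have [hub|nhub] := pselect (has_ubound E).
  by apply: (le_trans _ h2); apply: (ub_le_sup hub).
exfalso; move: h1; rewrite /ediam -/E sup_out; last by case.
by apply/negP; rewrite -ltNge mulr_gt0 ?invr_gt0 ?side_gt0.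
Qed.

Lemma lat_const : dyadic_lattice mu n Dl ->
  exists C : R, 1 <= C /\ forall j Q, Dl j Q ->
    C^-1 * side j <= ediam Q /\
    ((C^-1 * side j ^+ n)%:E <= mu Q /\ mu Q <= (C * side j ^+ n)%:E)%E.
Proof.
move=> [_ [_ [_ [_ [[C [C0 HC]] _]]]]].
exists (Num.max C 1); split; first by rewrite le_max lexx orbT.
have C'0 : 0 < Num.max C 1 by rewrite lt_max ltr01 orbT.
have hinv : (Num.max C 1)^-1 <= C^-1.
  by rewrite lef_pV2 ?posrE // le_max lexx.
have hC : C <= Num.max C 1 by rewrite le_max lexx.
move=> j Q DQ; have [h1 [h2 [h3 h4]]] := HC j Q DQ.
have sn := exprn_ge0 n (ltW (side_gt0 R j)).
split; first by apply: le_trans h1; rewrite ler_wpM2r ?(ltW (side_gt0 _ _)).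
split.
  by apply: le_trans h3; rewrite lee_fin ler_wpM2r.
by apply: le_trans h4 _; rewrite lee_fin ler_wpM2r.
Qed.

Lemma lat_gen : dyadic_lattice mu n Dl -> forall (C : R) i j Q Rc,
  (forall j Q, Dl j Q -> C^-1 * side j <= ediam Q) ->
  Dl i Q -> Dl j Rc -> Q `<=` Rc -> C^-1 * side i <= side j.
Proof.
move=> L C i j Q Rc HC DQ DR QR.
apply: le_trans (HC i Q DQ) _; rewrite /ediam.
have [_ [_ [q Qq]]] := L.1 i Q DQ.
apply: ge_sup; first by exists (enorm (q - q)); exists q => //; exists q.
move=> _ [x Qx [y Qy <-]]; exact: lat_diam L j Rc x y DR (QR _ Qx) (QR _ Qy).
Qed.


Lemma count_cubes : dyadic_lattice mu n Dl -> forall (C A : R), 0 < C -> 0 < A ->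
  (forall j Q, Dl j Q -> ((C^-1 * side j ^+ n)%:E <= mu Q)%E) ->
  (forall x r, supp mu x -> 0 < r -> (mu (eball x r) <= (A * r ^+ n)%:E)%E) ->
  forall i (x0 : Rd R d) (rho : R) (F : set (int * set (Rd R d))),
  finite_set F -> supp mu x0 -> 0 <= rho ->
  (forall p, F p -> p.1 = i /\ Dl i p.2 /\ exists q, p.2 q /\ enorm (q - x0) <= rho * side i) ->
  \sum_(p \in F) (1 : R) <= C * A * (2 * rho + 3) ^+ n.
Proof.
move=> L C A C0 A0 HC HA i x0 rho F finF sx0 rho0 HF.
set s := side i; have s0 : 0 < s by exact: side_gt0.
have triv : trivIset F (fun p => p.2).
  move=> [i1 Q1] [i2 Q2] F1 F2 [z [z1 z2]].
  have [/= e1 [D1 _]] := HF _ F1; have [/= e2 [D2 _]] := HF _ F2.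
  rewrite e1 e2 in D1 D2 *.
  have [->//|neq] := pselect (Q1 = Q2).
  have := (L.2.2.1 i Q1 Q2 D1 D2 neq).
  by move=> h; have : (Q1 `&` Q2) z by []; rewrite h.
have meas : forall p, F p -> measurable p.2.
  by move=> p /HF [_ [Dp _]]; have [] := L.1 _ _ Dp.
have U := measure_fin_bigcup mu finF triv meas.
have sub : \bigcup_(p in F) p.2 `<=` eball x0 ((2 * rho + 3) * s).
  move=> z [p Fp pz]; have [e1 [Dp [q [pq hq]]]] := HF p Fp.
  rewrite /eball /=.
  have htri := @enorm_tri R d z q x0. apply: (le_lt_trans htri).
  have hzq := lat_diam L i p.2 z q Dp pz pq.
  rewrite -/s in hq hzq.
  have := @enorm_ge0 R d (z - q); have := @enorm_ge0 R d (q - x0). nra.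
have le1 : (mu (\bigcup_(p in F) p.2) <= mu (eball x0 ((2 * rho + 3) * s)))%E.
  apply: le_measure => //; rewrite inE.
    exact: fin_bigcup_measurable.
  exact: eball_meas.
have le2 : (\sum_(p \in F) (C^-1 * s ^+ n)%:E <= \sum_(p \in F) mu p.2)%E.
  apply: lee_fsum => // p Fp; have [e1 [Dp _]] := HF p Fp.
  exact: HC _ _ Dp.
rewrite -U in le2.
have le3 := le_trans le2 (le_trans le1 (HA x0 _ sx0 _)).
have : 0 < (2 * rho + 3) * s by apply: mulr_gt0 => //; lra.
move=> /le3; rewrite fsumEFin // lee_fin -mulr_fsumr exprMn.
set S := \sum_(p \in F) (1 : R).
set k := (2 * rho + 3) ^+ n; set t := s ^+ n.
have t0 : 0 < t by apply: exprn_gt0.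
move=> h.
have := ler_wpM2l (ltW C0) h.
rewrite !mulrA mulrV ?unitfE ?gt_eqF // mul1r => h2.
have e : \sum_(i \in F) t = S * t by rewrite /S mulr_fsuml; apply: eq_fsbigr => ? _; rewrite mul1r.
by rewrite -(ler_pM2r t0) -e.
Qed.

End Lat.

Section Sums.
Variable R : realType.

Lemma fsum_partY (I J : choiceType) (X : set I) (Y : set J) (h : I -> J) (F : I -> \bar R) :
  finite_set X -> finite_set Y -> (forall a, X a -> Y (h a)) ->
  (\sum_(a \in X) F a = \sum_(b \in Y) \sum_(a \in X `&` [set a | h a = b]) F a)%E.
Proof.
move=> finX finY XY.
under [RHS]eq_fsbigr do rewrite fsbig_mkcondr.
rewrite exchange_fsbig //.
apply: eq_fsbigr => a Xa.
have Xa' : X a by move: Xa; rewrite inE.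
rewrite (fsbigD1 (h a)) //=; last exact: XY.
rewrite ifT ?inE // fsbig1 ?adde0 // => b [_ /= nb].
by rewrite ifF //; apply/negbTE; rewrite notin_setE /= => e; apply: nb; rewrite e.
Qed.

Lemma fsum_partYR (I J : choiceType) (X : set I) (Y : set J) (h : I -> J) (F : I -> R) :
  finite_set X -> finite_set Y -> (forall a, X a -> Y (h a)) ->
  \sum_(a \in X) F a = \sum_(b \in Y) \sum_(a \in X `&` [set a | h a = b]) F a.
Proof.
move=> finX finY XY.
under [RHS]eq_fsbigr do rewrite fsbig_mkcondr.
rewrite exchange_fsbig //.
apply: eq_fsbigr => a Xa.
have Xa' : X a by move: Xa; rewrite inE.
rewrite (fsbigD1 (h a)) //=; last exact: XY.
rewrite ifT ?inE // fsbig1 ?addr0 // => b [_ /= nb].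
by rewrite ifF //; apply/negbTE; rewrite notin_setE /= => e; apply: nb; rewrite e.
Qed.

Local Open Scope ereal_scope.

Lemma fsum_part (I J : choiceType) (X : set I) (h : I -> J) (F : I -> \bar R) :
  finite_set X ->
  \sum_(a \in X) F a = \sum_(b \in h @` X) \sum_(a \in X `&` [set a | h a = b]) F a.
Proof.
move=> finX; apply: fsum_partY => //; try exact: finite_image; by move=> a Xa; exists a.

Qed.
Lemma fsum_mult (I J : choiceType) (X : set I) (h : I -> J) (f : J -> \bar R) (M : R) :
  finite_set X -> (forall b, 0 <= f b) ->
  (forall b, (\sum_(a \in X `&` [set a | h a = b]) (1 : R)) <= M)%R ->
  \sum_(a \in X) f (h a) <= M%:E * \sum_(b \in h @` X) f b.
Proof.
move=> finX f0 HM.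
rewrite (@fsum_part _ _ _ h) // ge0_mule_fsumr //.
apply: lee_fsum; first exact: finite_image.
move=> b _.
rewrite (eq_fsbigr (fun a => f b)); last first.
  by move=> a; rewrite inE => -[_ /= ->].
have finXb : finite_set (X `&` [set a | h a = b]) by apply: sub_finite_set finX; apply: subIsetl.
rewrite (eq_fsbigr (fun a => f b * 1%:E)); last by move=> a _; rewrite mule1.
rewrite -ge0_mule_fsumr // fsumEFin // muleC.
by apply: lee_wpmul2r => //; rewrite lee_fin.
Qed.
End Sums.

Section More.
Variables (R : realType) (d n : nat) (mu : {measure set (Rd R d) -> \bar R}).

Lemma edist_pt (x : Rd R d) (Q : set (Rd R d)) (c c' : R) :
  Q !=set0 -> Defs.edist x Q <= c -> c < c' -> exists2 y, Q y & enorm (x - y) < c'.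
Proof.
move=> [q Qq] hle hlt.
have ne : [set enorm (x - y) | y in Q] !=set0 by exists (enorm (x - q)); exists q.
have [_ [y Qy <-] lt] := inf_lt ne (le_lt_trans hle hlt).
by exists y.
Qed.

Lemma ad_const : AD_regular mu n ->
  exists A : R, 0 < A /\ forall x r, supp mu x -> 0 < r ->
    (mu (eball x r) <= (A * r ^+ n)%:E)%E.
Proof.
move=> [C [C0 HC]]; exists C; split => // x r sx r0.
by have [] := HC x r sx r0.
Qed.

Lemma sum_I_const (m : nat) (c : R) : \sum_(t \in `I_m) c = c *+ m.
Proof. by rewrite -(fsbig_ord _ _ (fun=> c)) sumr_const card_ord. Qed.

End More.

Lemma ler_fsumR (R : realType) (I : choiceType) (X : set I) (f g : I -> R) :
  finite_set X -> (forall a, X a -> f a <= g a) ->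
  \sum_(a \in X) f a <= \sum_(a \in X) g a.
Proof.
move=> finX fg; rewrite !fsbig_finite // big_seq [leRHS]big_seq.
by apply: ler_sum => i; rewrite in_fset_set // inE; exact: fg.
Qed.
Arguments lat_diam {R d n mu Dl}.
Arguments lat_const {R d n mu Dl}.
Arguments lat_gen {R d n mu Dl}.
Arguments count_cubes {R d n mu Dl}.
Arguments ad_const {R d n mu}.
Arguments edist_pt {R d}.
Arguments enorm_tri {R d}.
Arguments enormB {R d}.
Arguments enorm_ge0 {R d}.
Arguments eball_meas {R d}.

Lemma int_fiber1 (a k g : int) (m0 k0 : nat) : a + k + m0%:Z = g -> - k0%:Z <= k <= k0%:Z ->
  (absz (a - (g - m0%:Z) + k0%:Z)%R < (2 * k0 + 1))%N.
Proof. move=> e /andP[h1 h2]. lia. Qed.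

Lemma int_fiber2 (a k g : int) (m0 k0 t : nat) : a + k + m0%:Z = g -> - k0%:Z <= k <= k0%:Z ->
  absz (a - (g - m0%:Z) + k0%:Z)%R = t -> a = g - m0%:Z - k0%:Z + t%:Z.
Proof. move=> e /andP[h1 h2] h3. lia. Qed.

Theorem lemma6p7 (R : realType) (d n : nat)
  (mu : {measure set (Rd R d) -> \bar R})
  (Dl : int -> set (set (Rd R d))) (phi : R -> R)
  (eps0 delta0 : R) (m0 k0 : nat) :
  AD_regular mu n ->
  ~ ebounded (supp mu) ->
  dyadic_lattice mu n Dl ->
  admissible_phi phi ->
  0 < eps0 -> 0 < delta0 ->
  (forall (i : int) (Q : set (Rd R d)), Dl i Q ->
     (eps0%:E < beta1 mu n i Q)%E ->
     exists k : int, `|k| <= k0%:Z /\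
       exists P : set (Rd R d), Dl (i + k + m0%:Z) P /\ P `<=` dil mu 4 i Q /\
         forall x, P x -> delta0 <= enorm (Sm mu n phi (i + k) x)) ->
  forall C1 : R, 0 < C1 ->
  (forall (j : int) (Rc : set (Rd R d)), Dl j Rc ->
     (\esum_(p in [set p : int * set (Rd R d) |
                   (exists k : int, p.1 = (k + m0%:Z)%R /\ Dl p.1 p.2 /\
                      forall x, p.2 x -> (delta0 <= enorm (Sm mu n phi k x))%R)
                   /\ p.2 `<=` Rc]) mu p.2
      <= C1%:E * mu Rc)%E) ->
  exists C2 : R, 0 < C2 /\
  forall (j : int) (Rc : set (Rd R d)), Dl j Rc ->
     (\esum_(p in [set p : int * set (Rd R d) |
                   (Dl p.1 p.2 /\ (eps0%:E < beta1 mu n p.1 p.2)%E)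
                   /\ p.2 `<=` Rc]) mu p.2
      <= C2%:E * mu Rc)%E.
Proof.
move=> ADR unb L adm eps0p delta0p Hbad C1 C1p HB.
have [C [C1le HC]] := lat_const L.
have C0 : 0 < C by apply: lt_le_trans ltr01 C1le.
have HCd : forall j Q, Dl j Q -> C^-1 * side R j <= ediam Q.
  by move=> j Q D; have [] := HC j Q D.
have HCl : forall j Q, Dl j Q -> ((C^-1 * side R j ^+ n)%:E <= mu Q)%E.
  by move=> j Q D; have [_ []] := HC j Q D.
have HCu : forall j Q, Dl j Q -> (mu Q <= (C * side R j ^+ n)%:E)%E.
  by move=> j Q D; have [_ []] := HC j Q D.
have [A [A0 HA]] := ad_const ADR.
pose Lg := Num.bound C.
have hLg : C <= 2 ^+ Lg.
  apply/ltW/(lt_le_trans (archi_boundP (ltW C0))).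
  rewrite -/Lg -natrX ler_nat; apply/ltnW; exact: ltn_expl.
pose N0 := C * A * (2 * 4 + 3) ^+ n.
pose M := N0 *+ (2 * k0 + 1).
pose rho2 := 2 * (4 * C + 1).
pose N2 := C * A * (2 * rho2 + 3) ^+ n.
pose K1 := C * C * (2 ^+ (k0 + m0)) ^+ n.
pose E := (2 : R) ^+ (Lg + k0).
have N00 : 0 < N0 by rewrite /N0 !mulr_gt0 // exprn_gt0 //; lra.
have M0 : 0 < M by rewrite /M -mulr_natr mulr_gt0 // ltr0n addn1.
have rho20 : 0 < rho2 by rewrite /rho2; lra.
have N20 : 0 < N2 by rewrite /N2 !mulr_gt0 // exprn_gt0 //; lra.
have K10 : 0 < K1 by rewrite /K1 !mulr_gt0 // !exprn_gt0.
have E0 : 0 < E by rewrite /E exprn_gt0.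
have [ch Hch] : {ch : int * set (Rd R d) -> int * set (Rd R d) & forall a,
   Dl a.1 a.2 -> (eps0%:E < beta1 mu n a.1 a.2)%E ->
   `|(ch a).1| <= k0%:Z /\ Dl (a.1 + (ch a).1 + m0%:Z) (ch a).2 /\
   (ch a).2 `<=` dil mu 4 a.1 a.2 /\
   forall x, (ch a).2 x -> delta0 <= enorm (Sm mu n phi (a.1 + (ch a).1) x)}.
  apply: (@choice _ _ (fun a b => Dl a.1 a.2 -> (eps0%:E < beta1 mu n a.1 a.2)%E ->
   `|b.1| <= k0%:Z /\ Dl (a.1 + b.1 + m0%:Z) b.2 /\
   b.2 `<=` dil mu 4 a.1 a.2 /\
   forall x, b.2 x -> delta0 <= enorm (Sm mu n phi (a.1 + b.1) x))) => -[i Q].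
  have [[DQ hb]|nh] := pselect (Dl i Q /\ (eps0%:E < beta1 mu n i Q)%E).
    have [k [hk [P [DP [sP hS]]]]] := Hbad i Q DQ hb.
    by exists (k, P) => /= _ _.
  by exists (0, set0) => /= DQ hb; exfalso; apply: nh.
pose C2 := K1 * M * C1 * C * N2 * E ^+ n * C.
exists C2; split; first by rewrite /C2; do 6? apply: mulr_gt0 => //; exact: exprn_gt0.
move=> j Rc DR.
have [_ [Rsupp [r0 Rr0]]] := L.1 j Rc DR.
pose j' := j - (Lg%:Z + k0%:Z).
pose hf := fun a : int * set (Rd R d) => (a.1 + (ch a).1 + m0%:Z, (ch a).2).
pose Aset := [set p : int * set (Rd R d) |
                   (Dl p.1 p.2 /\ (eps0%:E < beta1 mu n p.1 p.2)%E) /\ p.2 `<=` Rc].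
have hA : forall a, Aset a ->
  [/\ Dl a.1 a.2, a.2 `<=` Rc, - k0%:Z <= (ch a).1 <= k0%:Z,
      Dl (hf a).1 (hf a).2 /\ (hf a).2 `<=` dil mu 4 a.1 a.2 &
      (forall x, (ch a).2 x -> delta0 <= enorm (Sm mu n phi (a.1 + (ch a).1) x)) /\
      (side R a.1 <= C * side R j /\ j' <= (hf a).1)].
  move=> a [[Da hb] sub].
  have [hk [DP [sP hS]]] := Hch a Da hb.
  have hsi : side R a.1 <= C * side R j.
    have := lat_gen L C a.1 j a.2 Rc HCd Da DR sub.
    by rewrite ler_pdivrMl.
  have hi : j - Lg%:Z <= a.1.
    rewrite leNgt; apply/negP => /(side_lt R) hlt.
    have := lt_le_trans hlt hsi; rewrite sideD side_Nnat => h3.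
    have s0 := side_gt0 R j.
    have := ler_wpM2r (ltW s0) hLg => h4.
    by have := lt_le_trans h3 h4; rewrite mulrC ltxx.
  split => //; last split => //; last split => //.
    by rewrite -ler_norml.
  rewrite /= /j'.
  move: hk; rewrite ler_norml => /andP[hk1 _].
  rewrite opprD addrA; apply: (@le_trans _ _ (a.1 + (ch a).1)).
    exact: lerD.
  by rewrite lerDl.
rewrite /esum; apply: ge_ereal_sup => _ [X [finX XA] <-].
have step1 : (\sum_(a \in X) mu a.2 <= K1%:E * \sum_(a \in X) mu (hf a).2)%E.
  rewrite ge0_mule_fsumr; last by move=> ?; exact: measure_ge0.
  apply: lee_fsum => // a Xa.
  have [Da _ hk [DP _] _] := hA a (XA a Xa).
  set i := a.1 in Da hk *; set k := (ch a).1 in hk *.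
  set sg := side R (hf a).1.
  have sg0 : 0 < sg by exact: side_gt0.
  have si0 : 0 < side R i by exact: side_gt0.
  have hsg : side R i <= 2 ^+ (k0 + m0) * sg.
    have h1 : side R (i + (k0 + m0)%N%:Z) <= sg.
      apply: side_le; rewrite /= -/i -/k PoszD addrA lerD2r lerD2l.
      by case/andP: hk.
    move: h1; rewrite sideD side_nat => h1.
    by rewrite mulrC -ler_pdivrMr ?exprn_gt0.
  apply: le_trans (HCu _ _ Da) _.
  apply: le_trans (lee_wpmul2l (ltW K10 : (0 <= K1%:E)%E) (HCl _ _ DP)).
  rewrite -EFinM lee_fin.
  have -> : K1 * (C^-1 * side R (hf a).1 ^+ n) = C * ((2 ^+ (k0 + m0) * sg) ^+ n).
    rewrite /K1 exprMn -/sg; field; exact: lt0r_neq0.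
  rewrite ler_pM2l //; apply: lerXn2r => //; rewrite nnegrE; [exact: ltW|apply: mulr_ge0 => //; exact: ltW].
have step2 : (\sum_(a \in X) mu (hf a).2 <= M%:E * \sum_(b \in hf @` X) mu b.2)%E.
  apply: (@fsum_mult R _ _ X hf (fun b => mu b.2) M finX) => [b|b]; first exact: measure_ge0.
  set Fb := X `&` [set a | hf a = b].
  have finFb : finite_set Fb by apply: sub_finite_set finX; exact: subIsetl.
  have [[a0 [Xa0 ha0]]|nFb] := pselect (Fb !=set0); last first.
    rewrite (_ : Fb = set0) ?fsbig_set0; first exact: ltW.
    by apply/seteqP; split => // x Fx; apply: nFb; exists x.
  have [_ _ _ [DP0 sP0] _] := hA a0 (XA a0 Xa0).
  have [_ [sPsupp [x0 Px0]]] := L.1 _ _ DP0.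
  have sx0 : supp mu x0 by exact: sPsupp.
  rewrite /= in ha0.
  pose g := b.1.
  pose tf := fun a : int * set (Rd R d) => absz (a.1 - (g - m0%:Z) + k0%:Z)%R.
  have hFtf : forall a, Fb a -> `I_(2 * k0 + 1) (tf a).
    move=> a [Xa /= ha]; have [_ _ hk _ _] := hA a (XA a Xa).
    by apply: (@int_fiber1 a.1 (ch a).1 g m0 k0) => //; rewrite /g -ha.
  rewrite (@fsum_partYR R _ _ Fb `I_(2 * k0 + 1) tf _ finFb (finite_II _) hFtf).
  apply: le_trans (_ : \sum_(t \in `I_(2 * k0 + 1)) N0 <= _); last by rewrite sum_I_const.
  apply: ler_fsumR; first exact: finite_II.
  move=> t _.
  pose i := g - m0%:Z - k0%:Z + t%:Z.
  apply: (count_cubes L C A C0 A0 HCl HA i x0 4).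
  - by apply: sub_finite_set finFb; exact: subIsetl.
  - exact: sx0.
  - lra.
  move=> a [[Xa /= ha] /= hta].
  have [Da _ hk [DP sP] _] := hA a (XA a Xa).
  have ea : a.1 = i.
    by apply: (@int_fiber2 a.1 (ch a).1 g m0 k0 t) => //; rewrite /g -ha.
  split => //; split; first by rewrite -ea.
  have x0P : (hf a).2 x0 by rewrite ha -ha0.
  have [_ hd] := sP x0 x0P.
  have [_ [_ Qne]] := L.1 _ _ Da.
  have e1 : Defs.edist x0 a.2 <= 3 * side R a.1.
    by move: hd; have -> : (4 - 1 : R) = 3 by lra.
  have e2 : 3 * side R a.1 < 4 * side R a.1 by have := side_gt0 R a.1; lra.
  have [y Qy hy] := edist_pt x0 a.2 _ _ Qne e1 e2.
  exists y; split => //; rewrite enormB -ea; exact: ltW.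
pose Y := hf @` X.
have finY : finite_set Y by exact: finite_image.
have [anc Hanc] : {anc : int * set (Rd R d) -> set (Rd R d) &
    forall b, Y b -> Dl j' (anc b) /\ b.2 `<=` anc b}.
  apply: (@choice _ _ (fun b R' => Y b -> Dl j' R' /\ b.2 `<=` R')) => b.
  have [[a Xa <-]|nY] := pselect (Y b); last by exists set0.
  have [_ _ _ [DP _] [_ [_ hg]]] := hA a (XA a Xa).
  have [_ [sPsupp [x Px]]] := L.1 _ _ DP.
  have [R' [DR' R'x]] := L.2.1 j' x (sPsupp x Px).
  exists R' => _; split => //.
  have [//|dis] := L.2.2.2.1 _ _ _ _ hg DP DR'.
  by exfalso; have : ((hf a).2 `&` R') x by []; rewrite dis.
pose hz := fun b : int * set (Rd R d) => (j', anc b).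
have sjj' : side R j <= side R j'.
  by apply: side_le; rewrite /j' lerBlDr lerDl.
have step3 : (\sum_(b \in Y) mu b.2 <= (C1 * C * side R j' ^+ n * N2)%:E)%E.
  rewrite (@fsum_part R _ _ Y hz) //.
  apply: (@le_trans _ _ (\sum_(z \in hz @` Y) (C1 * C * side R j' ^+ n)%:E)%E).
    apply: lee_fsum; first exact: finite_image.
    move=> z [b0 Yb0 <-].
    have [DR0 _] := Hanc b0 Yb0.
    apply: (@le_trans _ _ (C1%:E * mu (anc b0))%E); last first.
      rewrite -mulrA EFinM; apply: lee_wpmul2l; first by rewrite lee_fin ltW.
      exact: HCu.
    apply: le_trans (HB j' (anc b0) DR0).
    apply: esum_ge; exists (Y `&` [set b | hz b = hz b0]); last exact: lexx.
    split; first by apply: sub_finite_set finY; exact: subIsetl.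
    move=> b [Yb /= hb].
    have eanc : anc b = anc b0 by case: hb.
    have [_ subb] := Hanc b Yb.
    case: Yb => a Xa eb.
    have [Da sub hk [DP sP] [hS _]] := hA a (XA a Xa).
    rewrite -eb in subb *; split; last by rewrite -eanc -eb.
    by exists (a.1 + (ch a).1); split; [by [] | split; [exact: DP | exact: hS]].
  rewrite fsumEFin; last exact: finite_image.
  rewrite lee_fin -(mulr1 (C1 * C * side R j' ^+ n)) -mulr_fsumr -!mulrA.
  rewrite mul1r; apply: ler_wpM2l; first exact: ltW.
  apply: ler_wpM2l; first exact: ltW.
  apply: ler_wpM2l; first exact: (exprn_ge0 _ (ltW (side_gt0 _ _))).
  apply: (count_cubes L C A C0 A0 HCl HA j' r0 rho2).
  - exact: finite_image.
  - exact: Rsupp.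
  - exact: ltW.
  move=> _ [b Yb <-]; have [DRb subb] := Hanc b Yb.
  split => //; split => //.
  case: Yb => a Xa eb; rewrite -eb in subb *.
  have [Da sub hk [DP sP] [hS [hsi hg]]] := hA a (XA a Xa).
  have [_ [_ [x Px]]] := L.1 _ _ DP.
  exists x; split; first exact: subb.
  have [_ hd] := sP x Px.
  have [_ [_ Qne]] := L.1 _ _ Da.
  have e1 : Defs.edist x a.2 <= 3 * side R a.1.
    by move: hd; have -> : (4 - 1 : R) = 3 by lra.
  have e2 : 3 * side R a.1 < 4 * side R a.1 by have := side_gt0 R a.1; lra.
  have [y Qy hy] := edist_pt x a.2 _ _ Qne e1 e2.
  have ry := lat_diam L j Rc y r0 DR (sub y Qy) Rr0.
  have ht := enorm_tri x y r0.
  have h5 : rho2 * side R j <= rho2 * side R j' by apply: ler_wpM2l => //; exact: ltW.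
  have e : rho2 * side R j = 8 * (C * side R j) + 2 * side R j by rewrite /rho2; ring.
  lra.
have hsj : side R j' = side R j * E.
  by rewrite /j' -PoszD sideD side_Nnat.
apply: le_trans step1 _.
apply: le_trans (lee_wpmul2l (ltW K10 : (0 <= K1%:E)%E) step2) _.
apply: le_trans (lee_wpmul2l (ltW K10 : (0 <= K1%:E)%E) (lee_wpmul2l (ltW M0 : (0 <= M%:E)%E) step3)) _.
rewrite -!EFinM.
have C20 : 0 < C2 by rewrite /C2; do 6? apply: mulr_gt0 => //; exact: exprn_gt0.
apply: le_trans (lee_wpmul2l (_ : (0 <= C2%:E)%E) (HCl _ _ DR)); last by rewrite lee_fin ltW.
rewrite -EFinM lee_fin hsj exprMn.
rewrite le_eqVlt; apply/orP; left; apply/eqP; rewrite /C2; field.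
exact: lt0r_neq0.
Qed.
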